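(* Let a Lie group with Lie algebra $\mathfrak g$ act on a manifold $N$, with induced action $\xi\triangleright f$ of $\xi\in\mathfrak g$ on $f\in C^\infty(N)$, choose a basis $\{e_i\}$ of $\mathfrak g$ with dual basis $\{e^i\}$, and define derivations of $C^\infty(N)\otimes S(\mathfrak g)$ by $\check e_i(v)=[e_i,v]$, $\check e_i(f)=0$; $\check e^i(v)=e^i(v)$, $\check e^i(f)=0$; $\check c_i(v)=0$, $\check c_i(f)=e_i\triangleright f$. Let $\sum X\otimes Y=-\sum_i(\check c_i+\check e_i/2)\otimes\check e^i$ and define, for functions $a$ and $1$-forms $\xi$, $$\hat\nabla_a\xi=\sum\big(X(a)\,\mathcal L_Y\xi-Y(a)\,\mathcal L_X\xi\big)$$ ($\mathcal L$ the Lie derivative). Then for $v,w\in\mathfrak g$ and $f,h\in C^\infty(N)$: $$\hat\nabla_v{\rm d}w=\tfrac12{\rm d}[v,w],\quad \hat\nabla_v{\rm d}h={\rm d}(v\triangleright h),\quad \hat\nabla_f{\rm d}w=0,\quad\hat\nabla_f{\rm d}h=0.$$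
   Context: $\hat\nabla$ is the preconnection induced by a cochain twist $F^{-1}=1\otimes1+\hbar\sum X\otimes Y+O(\hbar^2)$: with $a\bullet\xi=(F^{-(1)}\triangleright a)(F^{-(2)}\triangleright\xi)$ (vector fields acting by Lie derivative), $a\bullet\xi-\xi\bullet a=\hbar\hat\nabla_a\xi+O(\hbar^2)$. Here $v\in\mathfrak g$ are viewed as linear functions on $\mathfrak g^*$, so these are objects on $N\times\mathfrak g^*$. *)

(* Defs.v *)
From HB Require Import structures.
From mathcomp Require Import all_boot all_order all_algebra.
Set Implicit Arguments. Unset Strict Implicit. Unset Printing Implicit Defensive.
Import Order.TTheory GRing.Theory Num.Theory.
Local Open Scope ring_scope.

Section Defs.
Variable R : realFieldType.

(* A finite-dimensional Lie algebra g, written in a chosen basis: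
   g = 'rV[R]_n, e_i = delta_mx 0 i, and e^i(v) = v 0 i. *)
Definition lie_bracket (n : nat) (br : 'rV[R]_n -> 'rV[R]_n -> 'rV[R]_n) :=
  [/\ forall a u v w, br (a *: u + v) w = a *: br u w + br v w,
      forall a u v w, br u (a *: v + w) = a *: br u v + br u w,
      forall v, br v v = 0
    & forall u v w, br u (br v w) + br v (br w u) + br w (br u v) = 0].

Definition basis_vec (n : nat) (i : 'I_n) : 'rV[R]_n := delta_mx 0 i.
Definition dual_coord (n : nat) (i : 'I_n) (v : 'rV[R]_n) : R := v 0 i.

(* R-linear derivations of a commutative R-algebra (= vector fields when the
   algebra is an algebra of smooth functions). *)
Definition derivation (C : comAlgType R) (D : C -> C) :=
  [/\ forall a b, D (a + b) = D a + D b,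
      forall (r : R) a, D (r *: a) = r *: D a
    & forall a b, D (a * b) = D a * b + a * D b].

(* R-algebra morphisms (e.g. pullback of functions along N x g^* -> N). *)
Definition alg_morph (A C : comAlgType R) (p : A -> C) :=
  [/\ forall a b, p (a + b) = p a + p b,
      forall (r : R) a, p (r *: a) = r *: p a,
      forall a b, p (a * b) = p a * p b
    & p 1 = 1].

Definition lie_action (n : nat) (br : 'rV[R]_n -> 'rV[R]_n -> 'rV[R]_n)
  (A : comAlgType R) (act : 'rV[R]_n -> A -> A) :=
  [/\ forall a u v f, act (a *: u + v) f = a *: act u f + act v f,
      forall v, derivation (act v)
    & forall u v f, act u (act v f) - act v (act u f) = act (br u v) f].

(* Kaehler-type de Rham differential d : C -> Omega^1, Omega^1 a C-module
   generated by exact forms (as the smooth 1-forms are). *)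
Definition differential (C : comAlgType R) (Om : lmodType C) (d : C -> Om) :=
  [/\ forall a b, d (a + b) = d a + d b,
      forall (r : R) a, d (r *: a) = (r%:A : C) *: d a,
      forall a b, d (a * b) = a *: d b + b *: d a
    & forall om : Om, exists s : seq (C * C), om = \sum_(p <- s) p.1 *: d p.2].

Definition lie_derivative (C : comAlgType R) (Om : lmodType C) (d : C -> Om)
  (L : (C -> C) -> Om -> Om) :=
  forall D, derivation D ->
  [/\ forall c, L D (d c) = d (D c),
      forall om1 om2, L D (om1 + om2) = L D om1 + L D om2
    & forall c om, L D (c *: om) = D c *: om + c *: L D om].

Definition hat_nabla (n : nat) (C : comAlgType R) (Om : lmodType C)
  (L : (C -> C) -> Om -> Om) (X Y : 'I_n -> C -> C) (a : C) (xi : Om) : Om :=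
  \sum_(i < n) (X i a *: L (Y i) xi - Y i a *: L (X i) xi).

Definition XX (n : nat) (C : comAlgType R) (ce cc : 'I_n -> C -> C) :
  'I_n -> C -> C := fun i c => - (cc i c + (2^-1 : R) *: ce i c).
Definition YY (n : nat) (C : comAlgType R) (cd : 'I_n -> C -> C) :
  'I_n -> C -> C := cd.

End Defs.

(* Main.v *)
Require Import Defs.
From mathcomp Require Import all_boot all_order all_algebra.
Import Order.TTheory GRing.Theory Num.Theory.
Local Open Scope ring_scope.

Lemma add0f {U V : zmodType} {f : U -> V} :
  (forall a b, f (a + b) = f a + f b) -> f 0 = 0.
Proof. move=> H; have h := H 0 0; rewrite addr0 in h.
by apply: (addrI (f 0)); rewrite addr0 -h. Qed.

Lemma addNf {U V : zmodType} {f : U -> V} :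
  (forall a b, f (a + b) = f a + f b) -> forall a, f (- a) = - f a.
Proof. move=> H a; apply: (addrI (f a)); by rewrite -H !subrr (add0f H). Qed.

Lemma addsumf {U V : zmodType} {f : U -> V} {I} (s : seq I) (F : I -> U) :
  (forall a b, f (a + b) = f a + f b) ->
  f (\sum_(i <- s) F i) = \sum_(i <- s) f (F i).
Proof. by move=> H; apply: (big_morph f H (add0f H)). Qed.

Lemma linsplit {R : realFieldType} {U V : lmodType R} {f : U -> V} :
  (forall (a : R) u v, f (a *: u + v) = a *: f u + f v) ->
  (forall u v, f (u + v) = f u + f v) /\ (forall a u, f (a *: u) = a *: f u).
Proof.
move=> H. have D : forall u v, f (u + v) = f u + f v.
  by move=> u v; have := H 1 u v; rewrite !scale1r.
split=> // a u; have := H a u 0; by rewrite !addr0 (add0f D) addr0.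
Qed.

Theorem proposition6p1p3
  (R : realFieldType) (n : nat) (br : 'rV[R]_n -> 'rV[R]_n -> 'rV[R]_n)
  (A : comAlgType R) (act : 'rV[R]_n -> A -> A)
  (C : comAlgType R) (pull : A -> C) (lin : 'rV[R]_n -> C)
  (Om : lmodType C) (d : C -> Om) (L : (C -> C) -> Om -> Om)
  (ce cd cc : 'I_n -> C -> C) :
  lie_bracket br ->
  lie_action br act ->
  alg_morph pull ->
  (forall (a : R) u v, lin (a *: u + v) = a *: lin u + lin v) ->
  differential d ->
  lie_derivative d L ->
  (forall i, derivation (ce i)) ->
  (forall i, derivation (cd i)) ->
  (forall i, derivation (cc i)) ->
  (forall i v, ce i (lin v) = lin (br (@basis_vec R n i) v)) ->
  (forall i f, ce i (pull f) = 0) ->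
  (forall i v, cd i (lin v) = (@dual_coord R n i v)%:A) ->
  (forall i f, cd i (pull f) = 0) ->
  (forall i v, cc i (lin v) = 0) ->
  (forall i f, cc i (pull f) = pull (act (@basis_vec R n i) f)) ->
  let nabla := hat_nabla L (XX ce cc) (YY cd) in
  [/\ forall v w, nabla (lin v) (d (lin w)) = ((2^-1 : R)%:A : C) *: d (lin (br v w)),
      forall v h, nabla (lin v) (d (pull h)) = d (pull (act v h)),
      forall f w, nabla (pull f) (d (lin w)) = 0
    & forall f h, nabla (pull f) (d (pull h)) = 0].
Proof.
move=> [brl _ _ _] [actl _ _] [pD pZ _ _] Hlin [dD dZ dM _] HL
  Dce Dcd Dcc ceL ceP cdL cdP ccL ccP nabla.
have [linD linZ] := linsplit Hlin.
have [pullD pullZ] : (forall u v, pull (u + v) = pull u + pull v) /\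
                     (forall (a : R) u, pull (a *: u) = a *: pull u) by [].
have d0 := add0f dD.
have sc0 : forall x : Om, (0 : C) *: x = 0.
  by move=> x; exact: scale0r.
have dN := addNf dD.
have d1 : d 1 = 0.
  have h := dM 1 1; rewrite mulr1 scale1r in h.
  by apply: (addrI (d 1)); rewrite addr0 -h.
have dA : forall r : R, d (r%:A) = 0 by move=> r; rewrite dZ d1 scaler0.
have DX : forall i, derivation (XX ce cc i).
  move=> i; have [ceD ceZ ceM] := Dce i; have [ccD ccZ ccM] := Dcc i.
  split; rewrite /XX /=.
  - by move=> a b; rewrite ceD ccD scalerDr addrACA opprD.
  - by move=> r a; rewrite ceZ ccZ scalerA mulrC -scalerA -scalerDr scalerN.
  - move=> a b; rewrite ceM ccM !scalerDr (scalerAr _ a (ce i b)) scalerAl.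
    by rewrite mulNr mulrN mulrDl mulrDr -!opprD; congr (- _);
       rewrite !addrA; congr (_ + _); rewrite -!addrA; congr (_ + _); rewrite addrC.
have LX : forall i c, L (XX ce cc i) (d c) = d (XX ce cc i c).
  by move=> i c; have [h _ _] := HL _ (DX i).
have LY : forall i c, L (cd i) (d c) = d (cd i c).
  by move=> i c; have [h _ _] := HL _ (Dcd i).
have XlinP : forall i v, XX ce cc i (lin v) = - ((2^-1 : R) *: lin (br (@basis_vec R n i) v)).
  by move=> i v; rewrite /XX ccL ceL add0r.
have XpullP : forall i f, XX ce cc i (pull f) = - pull (act (@basis_vec R n i) f).
  by move=> i f; rewrite /XX ccP ceP scaler0 addr0.
rewrite /nabla /hat_nabla /YY; split.
- move=> v w.
  rewrite [in RHS](row_sum_delta v).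
  have [brD brZ] := linsplit (fun a u v => brl a u v w).
  rewrite (addsumf _ _ brD) (addsumf _ _ linD) (addsumf _ _ dD) scaler_sumr.
  apply: eq_bigr => i _.
  rewrite LY LX cdL dA scaler0 sub0r XlinP cdL /dual_coord dN dZ.
  by rewrite brZ linZ dZ scalerN opprK !scalerA mulrC.
- move=> v h.
  rewrite [in RHS](row_sum_delta v).
  have [acD acZ] := linsplit (fun a u v => actl a u v h).
  rewrite (addsumf _ _ acD) (addsumf _ _ pullD) (addsumf _ _ dD).
  apply: eq_bigr => i _.
  rewrite LY LX cdP d0 scaler0 sub0r XpullP cdL /dual_coord dN scalerN opprK.
  by rewrite acZ pullZ dZ.
- move=> f w; apply: big1 => i _.
  by rewrite LY cdL dA scaler0 cdP sub0r sc0 oppr0.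
- move=> f h; apply: big1 => i _.
  by rewrite LY !cdP d0 scaler0 sub0r sc0 oppr0.
Qed.
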